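(* Let $q$ be a prime power with $q\equiv1\pmod4$. The Paley sum graph $X_\Sigma(q)$ is a Ramanujan graph. Moreover, if $q=p^{2k}$ with $p$ prime and $\sigma:\mathbb F_q\to\mathbb F_q$ is the automorphism $x\mapsto x^{p^k}$, then the twisted Paley graph $X(q)^\sigma$ and the twisted Paley sum graph $X_\Sigma(q)^\sigma$ are Ramanujan graphs.
   Context: Let $Q=\{x^2:x\in\mathbb F_q^*\}$ be the set of nonzero squares in $\mathbb F_q$. All graphs have vertex set $\mathbb F_q$ and, for each $s\in Q$: the Paley sum graph $X_\Sigma(q)$ has an edge from $x$ to $-x+s$; the twisted Paley graph $X(q)^\sigma$ has an edge from $x$ to $\sigma(x+s)$; the twisted Paley sum graph $X_\Sigma(q)^\sigma$ has an edge from $x$ to $\sigma(-x+s)$. A $k$-regular undirected graph is Ramanujan if every eigenvalue $\lambda$ of its adjacency matrix with $|\lambda|\ne k$ satisfies $|\lambda|\le2\sqrt{k-1}$. *)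

(* Defs.v *)
From HB Require Import structures.
From mathcomp Require Import all_boot all_order all_algebra all_field.
Set Implicit Arguments. Unset Strict Implicit. Unset Printing Implicit Defensive.
Import Order.TTheory GRing.Theory Num.Theory.
Local Open Scope ring_scope.

Definition nzsquares (F : finFieldType) : {set F} :=
  [set y | [exists x : F, (x != 0) && (y == x ^+ 2)]].

Definition adjmx (F : finFieldType) (f : F -> F -> F) : 'M[algC]_#|F| :=
  \matrix_(i, j) (if [exists s in nzsquares F, enum_val j == f (enum_val i) s]
                  then 1 else 0).

Definition paley_sum_adj (F : finFieldType) : 'M[algC]_#|F| :=
  adjmx (fun x s : F => - x + s).
Definition twisted_paley_adj (F : finFieldType) (sigma : F -> F) : 'M[algC]_#|F| :=
  adjmx (fun x s : F => sigma (x + s)).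
Definition twisted_paley_sum_adj (F : finFieldType) (sigma : F -> F) : 'M[algC]_#|F| :=
  adjmx (fun x s : F => sigma (- x + s)).

Definition ramanujan (n : nat) (A : 'M[algC]_n) : Prop :=
  exists k : nat,
    [/\ A^T = A,
        (forall i, \sum_j A i j = k%:R) &
        (forall lambda : algC, eigenvalue A lambda ->
           `|lambda| != k%:R -> `|lambda| <= 2 * sqrtC (k.-1)%:R)].

(* Main.v *)
Require Import Defs.
From HB Require Import structures.
From mathcomp Require Import all_boot all_order all_algebra all_field.
From mathcomp Require Import zify ring.
Set Implicit Arguments. Unset Strict Implicit. Unset Printing Implicit Defensive.
Import Order.TTheory GRing.Theory Num.Theory.
Local Open Scope ring_scope.



Section Chi.
Variables (F : finFieldType) (c : nat).
Hypothesis hq : #|F| = (4 * c + 1)%N.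

Local Notation Q := (nzsquares F).

Lemma c_pos : (0 < c)%N.
Proof.
have : (1 < #|F|)%N.
  by apply/card_gt1P; exists 0, 1; split => //; rewrite eq_sym oner_neq0.
by rewrite hq; case: c.
Qed.

Lemma unit_pow (x : F) : x != 0 -> x ^+ (4 * c) = 1.
Proof.
move=> x0; have := expf_card x; rewrite hq exprD expr1 => h.
by apply: (mulIf x0); rewrite h mul1r.
Qed.

Lemma inQ (x : F) : (x \in Q) = [exists r : F, (r != 0) && (x == r ^+ 2)].
Proof. by rewrite inE. Qed.

Lemma card_R : (#|[set x : F | x ^+ (2 * c) == 1%R]| <= 2 * c)%N.
Proof.
have cp := c_pos.
have := @max_poly_roots F ('X^(2 * c) - 1) (enum [set x : F | x ^+ (2 * c) == 1%R]).
rewrite size_XnsubC ?muln_gt0 // -cardE ltnS; apply.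
- apply/eqP => /(congr1 (size : {poly F} -> nat)).
  by rewrite size_XnsubC ?muln_gt0 // size_poly0.
- apply/allP => x; rewrite mem_enum inE => /eqP hx.
  by rewrite /root !hornerE hx subrr.
- exact: enum_uniq.
Qed.

Lemma card_Q_ge : (4 * c <= 2 * #|Q|)%N.
Proof.
have -> : (4 * c = #|predC1 (0%R : F)|)%N by rewrite cardC1 hq addn1.
rewrite -(sum1_card (predC1 (0%R : F))).
rewrite (partition_big (fun x : F => x ^+ 2) (fun s => s \in Q)) /=; last first.
  by move=> x x0; rewrite inQ; apply/existsP; exists x; rewrite eqxx andbT; exact: x0.
rewrite mulnC -sum_nat_const; apply: leq_sum => s.
rewrite inQ => /existsP [r /andP [r0 /eqP ->]].
rewrite sum1_card.
apply: leq_trans (_ : #|[set r; -r]| <= 2)%N; last first.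
  by rewrite cards2; case: (_ != _).
apply: subset_leq_card; apply/subsetP => x; rewrite !inE => /andP [_].
by rewrite eqf_sqr.
Qed.

Lemma euler (x : F) : (x \in Q) = (x != 0) && (x ^+ (2 * c) == 1).
Proof.
set R := [set x : F | (x != 0) && (x ^+ (2 * c) == 1)].
have sQR : Q \subset R.
  apply/subsetP => y; rewrite inQ => /existsP [r /andP [r0 /eqP ->]].
  rewrite inE sqrf_eq0 r0 /= -exprM (_ : (2 * (2 * c) = 4 * c)%N); last lia.
  by rewrite unit_pow.
have cR : (#|R| <= #|Q|)%N.
  apply: leq_trans (leq_trans (subset_leq_card _) card_R) _.
  - by apply/subsetP => y; rewrite !inE => /andP [_ ->].
  - by have := card_Q_ge; lia.
have /eqP -> : Q == R by rewrite eqEcard sQR.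
by rewrite inE.
Qed.


Lemma card_Q : #|Q| = (2 * c)%N.
Proof.
apply/eqP; rewrite eqn_leq; apply/andP; split; last by have := card_Q_ge; lia.
apply: leq_trans card_R; apply: subset_leq_card; apply/subsetP => x.
by rewrite euler inE => /andP [].
Qed.

Definition chi (x : F) : algC :=
  if x == 0 then 0 else if x ^+ (2 * c) == 1 then 1 else -1.

Lemma pow_pm (x : F) : x != 0 -> (x ^+ (2 * c) == 1) || (x ^+ (2 * c) == -1).
Proof.
move=> x0; rewrite -sqrf_eq1 -exprM (_ : (2 * c * 2 = 4 * c)%N); last lia.
by rewrite unit_pow.
Qed.

Lemma chi0 : chi 0 = 0.
Proof. by rewrite /chi eqxx. Qed.

Lemma chiM x y : chi (x * y) = chi x * chi y.
Proof.
rewrite /chi mulf_eq0.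
have [->|x0] := eqVneq x 0; [by rewrite /= mul0r|].
have [->|y0] := eqVneq y 0; [by rewrite orbT mulr0|].
rewrite /= exprMn.
have [hx|hx] := eqVneq (x ^+ (2 * c)) 1; first by rewrite hx mul1r ?eqxx /= mul1r.
have /orP [] := pow_pm x0; first by move=> h; rewrite h in hx.
move=> /eqP hx'; have n1 : (-1 : F) != 1 by rewrite -hx'.
rewrite hx'.
have [hy|hy] := eqVneq (y ^+ (2 * c)) 1; first by rewrite hy mulr1 (negbTE n1) mulr1.
have /orP [] := pow_pm y0; first by move=> h; rewrite h in hy.
by move=> /eqP ->; rewrite !mulrNN !mulr1 ?eqxx.
Qed.

Lemma chiE x : chi x = if x == 0 then 0 else if x \in Q then 1 else -1.
Proof. by rewrite euler /chi; case: (x == 0). Qed.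

Lemma chi1 : chi 1 = 1.
Proof. by rewrite /chi oner_eq0 expr1n eqxx. Qed.

Lemma chiN1 : chi (-1) = 1.
Proof.
by rewrite /chi oppr_eq0 oner_eq0 exprM sqrrN expr1n expr1n eqxx.
Qed.

Lemma chiN x : chi (- x) = chi x.
Proof. by rewrite -mulN1r chiM chiN1 mul1r. Qed.

Lemma chi_sqr x : x != 0 -> chi x * chi x = 1.
Proof.
move=> x0; rewrite /chi (negbTE x0).
by case: (_ == 1); rewrite ?mulr1 ?mulrNN ?mulr1.
Qed.

Lemma sum_chi : \sum_x chi x = 0.
Proof.
have [g /andP [g0 gn]] : exists g : F, (g != 0) && (g ^+ (2 * c) != 1).
  case: (pickP (fun g : F => (g != 0) && (g ^+ (2 * c) != 1))) => [g H|H].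
    by exists g.
  have : (#|predC1 (0%R : F)| <= 2 * c)%N.
    apply: leq_trans (subset_leq_card _) card_R.
    apply/subsetP => y; rewrite !inE => y0; have := H y; rewrite /= y0 /=.
    by move/negbFE.
  by rewrite cardC1 hq addn1 /=; have := c_pos; lia.
have chig : chi g = -1 by rewrite /chi (negbTE g0) (negbTE gn).
have E : \sum_x chi x = - \sum_x chi x.
  rewrite {1}(reindex_inj (mulfI g0)) /=.
  under eq_bigr do rewrite chiM chig mulN1r.
  by rewrite sumrN.
have : (\sum_x chi x) *+ 2 == 0 by rewrite mulr2n {1}E addNr.
by rewrite mulrn_eq0 /= => /eqP.
Qed.

Lemma jacobi d :
  \sum_u chi u * chi (u + d) = if d == 0 then (4 * c)%N%:R else -1.
Proof.
have [->|d0] := eqVneq d 0.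
  under eq_bigr do rewrite addr0.
  rewrite (bigD1 0) //= chi0 mul0r add0r.
  under eq_bigr => u u0 do rewrite chi_sqr //.
  by rewrite sumr_const cardC1 hq addn1.
have E : forall u, chi u * chi (u + d) = chi (1 + d * u^-1) - (u == 0)%:R.
  move=> u; have [->|u0] := eqVneq u 0.
    by rewrite chi0 mul0r invr0 mulr0 addr0 chi1 subrr.
  rewrite subr0 -chiM (_ : u * (u + d) = (u * u) * (1 + d * u^-1)).
    by rewrite (chiM (u * u)) (chiM u u) chi_sqr // mul1r.
  by rewrite mulrDr mulrDr mulr1 [u * u * _]mulrC -!mulrA mulKf // mulrC.
under eq_bigr do rewrite E.
rewrite sumrB.
have hinj : injective (fun u : F => 1 + d * u^-1).
  by move=> u v /addrI /(mulfI d0) /invr_inj.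
have -> : \sum_u chi (1 + d * u^-1) = 0.
  by have := sum_chi; rewrite (reindex_inj hinj).
rewrite (bigD1 0) //= ?eqxx big1 ?addr0 ?sub0r //.
by move=> u /negbTE ->.
Qed.

Lemma indQ a : ((a \in Q)%:R : algC) *+ 2 = chi a + 1 - (a == 0)%:R.
Proof.
rewrite euler /chi.
have [->|a0] := eqVneq a 0; first by rewrite /= mul0rn add0r subrr.
rewrite /=; case: (_ == 1) => /=.
  by rewrite mulr2n subr0.
by rewrite addNr subr0 mul0rn.
Qed.

End Chi.



Lemma sum_delta (F : finFieldType) (f : F -> algC) (y0 : F) :
  \sum_y f y * (y == y0)%:R = f y0.
Proof.
rewrite (bigD1 y0) //= eqxx mulr1 big1 ?addr0 // => y /negbTE ->.
by rewrite mulr0.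
Qed.

Lemma sum_delta' (F : finFieldType) (f : F -> algC) (y0 : F) :
  \sum_y (y == y0)%:R * f y = f y0.
Proof. by under eq_bigr do rewrite mulrC; exact: sum_delta. Qed.

Section Phi.
Variables (F : finFieldType) (c : nat).
Hypothesis hq : #|F| = (4 * c + 1)%N.
Variables (phi : F -> F) (b : bool).
Hypothesis phiD : forall x y, phi (x + y) = phi x + phi y.
Hypothesis phiK : forall x, phi (phi x) = x.
Hypothesis phiQ : forall x, (phi x \in nzsquares F) = (x \in nzsquares F).

Local Notation Q := (nzsquares F).
Local Notation chi := (chi c).
Local Notation e := ((-1 : F) ^+ b).

Lemma ee : e * e = 1.
Proof. by case: b; rewrite ?expr1 ?mulrNN ?mulr1 ?expr0 ?mulr1. Qed.

Lemma phi0 : phi 0 = 0.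
Proof. by apply: (@addrI _ (phi 0)); rewrite -phiD !addr0. Qed.

Lemma phiN x : phi (- x) = - phi x.
Proof. by apply: (@addrI _ (phi x)); rewrite -phiD !subrr phi0. Qed.

Lemma phi_inj : injective phi.
Proof. exact: (can_inj phiK). Qed.

Lemma phie x : phi (e * x) = e * phi x.
Proof. by case: b; rewrite ?expr1 ?mulN1r ?phiN // !expr0 !mul1r. Qed.

Lemma chie x : chi (e * x) = chi x.
Proof. by case: b; rewrite ?expr1 ?mulN1r ?chiN // !expr0 !mul1r. Qed.

Lemma chiphi x : chi (phi x) = chi x.
Proof.
rewrite !(chiE hq) phiQ; congr (if _ then _ else _).
by rewrite -{1}phi0 (inj_eq phi_inj).
Qed.

Lemma eQ x : (e * x \in Q) = (x \in Q).
Proof.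
case: b; last by rewrite expr0 mul1r.
by rewrite expr1 mulN1r !(euler hq) oppr_eq0 !exprM sqrrN.
Qed.

Definition tF (x y : F) := chi (phi y + e * x).
Definition pF (x y : F) : algC := ((phi y + e * x) == 0)%:R.
Definition aF (x y : F) : algC := ((phi y + e * x) \in Q)%:R.
Definition sF (x y : F) := chi (y - x).

Lemma aF_sym x y : aF x y = aF y x.
Proof.
rewrite /aF -[in RHS]phiQ phiD phiK phie -[in RHS](eQ).
by rewrite mulrDr mulrA ee mul1r addrC.
Qed.

Lemma aF_ind x y : aF x y *+ 2 = tF x y + 1 - pF x y.
Proof. exact: indQ. Qed.

Lemma aF_rowsum x : \sum_y aF x y = (2 * c)%N%:R.
Proof.
have hinj : injective (fun y => phi y + e * x).
  by move=> y z /addIr /phi_inj.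
rewrite /aF.
have -> : \sum_y ((phi y + e * x) \in Q)%:R = \sum_y ((y \in Q)%:R : algC).
  by rewrite [RHS](reindex_inj hinj).
rewrite (eq_bigr (fun y => if y \in Q then 1 else 0)); last by move=> y _; case: (_ \in _).
by rewrite -big_mkcond /= sumr_const (card_Q hq).
Qed.

Lemma tt x z : \sum_y tF x y * tF y z = (x == z)%:R * (4 * c + 1)%N%:R - 1.
Proof.
have hinj : injective (fun u => phi (u - e * x)).
  by move=> u w /phi_inj /addIr.
rewrite (reindex_inj hinj) /= /tF.
have E : forall u, phi (phi (u - e * x)) + e * x = u.
  by move=> u; rewrite phiK subrK.
have E2 : forall u, phi z + e * phi (u - e * x) = phi (e * (u + e * (z - x))).
  move=> u; rewrite -phie -phiD; congr (phi _).
  by rewrite !mulrDr !mulrN !mulrA ee !mul1r; ring.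
under eq_bigr do rewrite E E2 chiphi chie.
rewrite (jacobi hq) mulf_eq0 expf_eq0 oppr_eq0 oner_eq0 andbF /= subr_eq0.
rewrite eq_sym; case: (x == z) => /=.
  by rewrite mul1r -addn1 natrD addrK.
by rewrite mul0r sub0r.
Qed.

Lemma e_neq0 : e != 0.
Proof. by rewrite expf_eq0 oppr_eq0 oner_eq0 andbF. Qed.

Lemma eKK x : e * (e * x) = x.
Proof. by rewrite mulrA ee mul1r. Qed.

Lemma tp x z : \sum_y tF x y * pF y z = sF x z.
Proof.
have E : forall y, (phi z + e * y == 0) = (y == - (e * phi z)).
  move=> y; have -> : phi z + e * y = e * (y + e * phi z).
    by rewrite mulrDr eKK addrC.
  by rewrite mulf_eq0 (negbTE e_neq0) /= addr_eq0.
rewrite /pF; under eq_bigr do rewrite E.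
rewrite sum_delta /tF /sF phiN phie phiK -mulrN -mulrDr chie -(chiN hq).
by rewrite opprD opprK addrC.
Qed.

Lemma pt x z : \sum_y pF x y * tF y z = sF x z.
Proof.
have E : forall y, (phi y + e * x == 0) = (y == phi (- (e * x))).
  by move=> y; rewrite addr_eq0 (can2_eq phiK phiK).
rewrite /pF; under eq_bigr do rewrite E.
by rewrite sum_delta' /tF /sF phiN phie mulrN eKK -phiN -phiD chiphi.
Qed.

Lemma pp x z : \sum_y pF x y * pF y z = (x == z)%:R.
Proof.
have E : forall y, (phi y + e * x == 0) = (y == phi (- (e * x))).
  by move=> y; rewrite addr_eq0 (can2_eq phiK phiK).
rewrite {1}/pF; under eq_bigr do rewrite E.
rewrite sum_delta' /pF phiN phie mulrN eKK subr_eq0 (inj_eq phi_inj).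
by rewrite eq_sym.
Qed.
End Phi.



Lemma bound_aux (r mu : algC) : 0 <= r ->
  ((r ^+ 2 + 1 - mu ^+ 2) / 2) ^+ 2 = r ^+ 2 -> `|mu| <= r + 1.
Proof.
move=> r0 /eqP; rewrite eqf_sqr => /orP [] /eqP.
- move/(congr1 (fun t => t * 2)); rewrite mulfVK ?pnatr_eq0 // => X.
  have : mu ^+ 2 = (r - 1) ^+ 2 by apply: (@addrI _ (r * 2)); rewrite -{1}X; ring.
  move/eqP; rewrite eqf_sqr => /orP [] /eqP ->; rewrite ?normrN;
    apply: le_trans (ler_normB _ _) _; by rewrite normr1 ger0_norm.
- move/(congr1 (fun t => t * 2)); rewrite mulfVK ?pnatr_eq0 // => X.
  have : mu ^+ 2 = (r + 1) ^+ 2 by apply: (@addrI _ (- r * 2)); rewrite -{1}X; ring.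
  move/eqP; rewrite eqf_sqr => /orP [] /eqP ->; rewrite ?normrN;
    apply: le_trans (ler_normD _ _) _; by rewrite normr1 ger0_norm.
Qed.

Lemma bound (c : nat) (l : algC) : (0 < c)%N ->
  (((4 * c + 1)%N%:R + 1 - (l *+ 2) ^+ 2) / 2) ^+ 2 = (4 * c + 1)%N%:R ->
  `|l| <= 2 * sqrtC ((2 * c).-1)%N%:R.
Proof.
move=> c0 h.
set r := sqrtC ((4 * c + 1)%N%:R : algC).
have r0 : 0 <= r by rewrite sqrtC_ge0 ler0n.
have hr : r ^+ 2 = (4 * c + 1)%N%:R by rewrite sqrtCK.
have hl : `|l *+ 2| <= r + 1 by apply: bound_aux; rewrite // hr.
set t := sqrtC (((2 * c).-1)%N%:R : algC).
have t0 : 0 <= t by rewrite sqrtC_ge0 ler0n.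
have ht : t ^+ 2 = ((2 * c).-1)%N%:R by rewrite sqrtCK.
have hN : r <= (14 * c - 9)%N%:R.
  rewrite -ler_sqr ?nnegrE ?ler0n // hr -natrX ler_nat; nia.
have h1 : r + 1 <= 4 * t.
  rewrite -ler_sqr ?nnegrE ?mulr_ge0 ?ler0n ?addr_ge0 //.
  rewrite exprMn ht sqrrD1 hr.
  apply: le_trans (_ : _ <= (4 * c + 1)%N%:R + (14 * c - 9)%N%:R *+ 2 + 1) _.
    by rewrite lerD2r lerD2l lerMn2r hN orbT.
  have -> : ((4 * c + 1)%N%:R + (14 * c - 9)%N%:R *+ 2 + 1 : algC) =
     ((4 * c + 1) + (14 * c - 9) * 2 + 1)%N%:R by rewrite !natrD natrM mulr_natr.
  have -> : (4 : algC) ^+ 2 * ((2 * c).-1)%N%:R = (16 * (2 * c).-1)%N%:R.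
    by rewrite natrM -natrX.
  rewrite ler_nat; nia.
rewrite normrMn in hl.
have : `|l| *+ 2 <= (2 * t) *+ 2.
  apply: le_trans hl _; apply: le_trans h1 _.
  by rewrite mulr2n -mulrDl -natrD.
by rewrite lerMn2r.
Qed.



Definition mxF (F : finFieldType) (f : F -> F -> algC) : 'M[algC]_#|F| :=
  \matrix_(i, j) f (enum_val i) (enum_val j).

Lemma sum_ord (F : finFieldType) (h : F -> algC) :
  \sum_(i < #|F|) h (enum_val i) = \sum_x h x.
Proof. by rewrite -(big_enum_val (A := predT)). Qed.

Lemma mulmxF (F : finFieldType) (f g : F -> F -> algC) :
  mxF f *m mxF g = mxF (fun x z => \sum_y f x y * g y z).
Proof.
apply/matrixP => i j; rewrite !mxE; under eq_bigr do rewrite !mxE.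
exact: (sum_ord (fun y => f (enum_val i) y * g y (enum_val j))).
Qed.

Lemma mxF_delta (F : finFieldType) :
  mxF (fun x z : F => (x == z)%:R) = 1%:M.
Proof. by apply/matrixP => i j; rewrite !mxE (inj_eq enum_val_inj). Qed.

Section Mx.
Variables (F : finFieldType) (c : nat).
Hypothesis hq : #|F| = (4 * c + 1)%N.
Variables (phi : F -> F) (b : bool).
Hypothesis phiD : forall x y, phi (x + y) = phi x + phi y.
Hypothesis phiK : forall x, phi (phi x) = x.
Hypothesis phiQ : forall x, (phi x \in nzsquares F) = (x \in nzsquares F).

Local Notation A := (mxF (aF phi b)).
Local Notation T := (mxF (tF c phi b)).
Local Notation P := (mxF (pF phi b)).
Local Notation S := (mxF (sF c)).
Local Notation J := (mxF (fun _ _ : F => (1 : algC))).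
Local Notation q := ((4 * c + 1)%N%:R : algC).

Lemma idQ x : (id x \in nzsquares F) = (x \in nzsquares F). Proof. by []. Qed.

Lemma sF_id x y : sF c x y = tF c (@id F) true x y.
Proof. by rewrite /tF /sF expr1 mulN1r. Qed.

Lemma TT_eq : T *m T = q *: 1%:M - J.
Proof.
rewrite mulmxF; apply/matrixP => i j; rewrite !mxE (tt hq b phiD phiK phiQ).
by rewrite (inj_eq enum_val_inj) mulrC.
Qed.

Lemma SS_eq : S *m S = q *: 1%:M - J.
Proof.
rewrite mulmxF; apply/matrixP => i j; rewrite !mxE.
under eq_bigr do rewrite !sF_id.
rewrite (tt (phi := id) hq true (fun _ _ => erefl) (fun _ => erefl) idQ).
by rewrite (inj_eq enum_val_inj) mulrC.
Qed.

Lemma TP_eq : T *m P = S.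
Proof.
by rewrite mulmxF; apply/matrixP => i j; rewrite !mxE (tp hq b phiD phiK).
Qed.

Lemma PT_eq : P *m T = S.
Proof.
by rewrite mulmxF; apply/matrixP => i j; rewrite !mxE (pt hq b phiD phiK phiQ).
Qed.

Lemma PP_eq : P *m P = 1%:M.
Proof.
by rewrite mulmxF -mxF_delta; apply/matrixP => i j; rewrite !mxE (pp b phiD phiK).
Qed.

Lemma A2_eq : A *+ 2 = T + J - P.
Proof. by apply/matrixP => i j; rewrite !mxE -(aF_ind hq) mulr2n. Qed.


Lemma ram_gen : ramanujan A.
Proof.
have c0 := c_pos hq.
have rs : forall i, \sum_j A i j = (2 * c)%N%:R.
  move=> i.
  rewrite (eq_bigr (fun j => aF phi b (enum_val i) (enum_val j))); last by move=> j _; rewrite mxE.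
  by rewrite (sum_ord (fun y => aF phi b (enum_val i) y)) (aF_rowsum hq b phiK).
exists (2 * c)%N; split => //.
  by apply/matrixP => i j; rewrite !mxE (aF_sym hq b phiD phiK phiQ).
move=> l /eigenvalueP [v hv v0] hl.
have lk : l != (2 * c)%N%:R by apply: contraNneq hl => ->; rewrite normr_nat.
have s0 : \sum_j v 0 j = 0.
  have E1 : \sum_j (v *m A) 0 j = l * \sum_j v 0 j.
    by rewrite hv mulr_sumr; apply: eq_bigr => j _; rewrite mxE.
  have E2 : \sum_j (v *m A) 0 j = (\sum_j v 0 j) * (2 * c)%N%:R.
    under eq_bigr do rewrite mxE.
    rewrite exchange_big mulr_suml /=; apply: eq_bigr => i _.
    by rewrite -mulr_sumr rs.
  have : (l - (2 * c)%N%:R) * \sum_j v 0 j = 0 by rewrite mulrBl -E1 mulrC -E2 subrr.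
  by move/eqP; rewrite mulf_eq0 subr_eq0 (negbTE lk) /= => /eqP.
have vJ : v *m J = 0.
  apply/matrixP => i j; rewrite !mxE (ord1 i) -[RHS]s0.
  by apply: eq_bigr => k _; rewrite !mxE mulr1.
have h1 : v *m (T - P) = (l *+ 2) *: v.
  have -> : T - P = A *+ 2 - J by rewrite A2_eq addrAC addrK.
  by rewrite mulmxBr vJ subr0 mulr2n mulmxDr hv -scalerDl -mulr2n.
have h2 : v *m ((T - P) *m (T - P)) = ((l *+ 2) ^+ 2) *: v.
  by rewrite mulmxA h1 -scalemxAl h1 scalerA expr2.
have h3 : (T - P) *m (T - P) = (q + 1) *: 1%:M - J - (S + S).
  rewrite mulmxBl !mulmxBr TT_eq TP_eq PT_eq PP_eq.
  by apply/matrixP => i j; rewrite !mxE; ring.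
have h4 : v *m S + v *m S = ((q + 1) - (l *+ 2) ^+ 2) *: v.
  move: h2; rewrite h3 !mulmxBr mulmxDr scalemx1 mul_mx_scalar vJ subr0 => h2.
  by rewrite scalerBl -h2 opprB addrCA subrr addr0.
set nu := ((q + 1) - (l *+ 2) ^+ 2) / 2.
have h5 : v *m S = nu *: v.
  have -> : v *m S = 2^-1 *: (v *m S + v *m S).
    by rewrite -mulr2n -scaler_nat scalerA mulVf ?pnatr_eq0 // scale1r.
  by rewrite h4 scalerA mulrC.
have h6 : v *m (S *m S) = (nu ^+ 2) *: v.
  by rewrite mulmxA h5 -scalemxAl h5 scalerA expr2.
have h7 : (nu ^+ 2 - q) *: v = 0.
  move: h6; rewrite SS_eq mulmxBr vJ subr0 scalemx1 mul_mx_scalar => h6.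
  by rewrite scalerBl h6 subrr.
have hnu : nu ^+ 2 = q.
  by move/eqP: h7; rewrite scaler_eq0 (negbTE v0) orbF subr_eq0 => /eqP.
exact: bound c0 hnu.
Qed.

End Mx.



Lemma adj_eq (F : finFieldType) (f : F -> F -> F) (phi : F -> F) (b : bool) :
  (forall x y s, (y == f x s) = (s == phi y + (-1) ^+ b * x)) ->
  adjmx f = mxF (aF phi b).
Proof.
move=> H; apply/matrixP => i j; rewrite !mxE /aF.
have -> : [exists s in nzsquares F, enum_val j == f (enum_val i) s] =
    ((phi (enum_val j) + (-1) ^+ b * enum_val i) \in nzsquares F).
  apply/existsP/idP => [[s /andP [sQ]]|h]; first by rewrite H => /eqP <-.
  by exists (phi (enum_val j) + (-1) ^+ b * enum_val i); rewrite h H eqxx.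
by case: (_ \in _).
Qed.

Theorem theorem5p4 (F : finFieldType) :
  (#|F| %% 4 = 1)%N ->
  ramanujan (paley_sum_adj F) /\
  (forall p k : nat, prime p -> #|F| = (p ^ (2 * k))%N ->
     let sigma := fun x : F => x ^+ (p ^ k) in
     ramanujan (twisted_paley_adj sigma) /\
     ramanujan (twisted_paley_sum_adj sigma)).
Proof.
move=> h4; set c := (#|F| %/ 4)%N.
have hq : #|F| = (4 * c + 1)%N by rewrite {1}(divn_eq #|F| 4) h4 mulnC.
split.
  rewrite /paley_sum_adj (adj_eq (phi := id) (b := false)).
    exact: (ram_gen hq false (fun _ _ => erefl) (fun _ => erefl) (fun _ => erefl)).
  by move=> x y s; rewrite expr0 mul1r addrC eq_sym subr_eq.
move=> p k pp hpk sigma.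
have hch : p \in [pchar F] := card_finPcharP hpk pp.
have sigmaD : forall x y, sigma (x + y) = sigma x + sigma y.
  move=> x y; rewrite /sigma exprDn_pchar //.
  by rewrite (eq_pnat _ (pcharf_eq hch)) pnatX pnat_id.
have sigmaK : forall x, sigma (sigma x) = x.
  by move=> x; rewrite /sigma -exprM -expnD addnn -mul2n -hpk expf_card.
have sQ1 : forall x, x \in nzsquares F -> sigma x \in nzsquares F.
  move=> x; rewrite !inQ => /existsP [r /andP [r0 /eqP ->]].
  by apply/existsP; exists (sigma r); rewrite expf_neq0 // /sigma exprAC eqxx.
have sigmaQ : forall x, (sigma x \in nzsquares F) = (x \in nzsquares F).
  by move=> x; apply/idP/idP => [h|/sQ1 //]; rewrite -(sigmaK x) sQ1.
split.
  rewrite /twisted_paley_adj (adj_eq (phi := sigma) (b := true)).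
    exact: (ram_gen hq true sigmaD sigmaK sigmaQ).
  move=> x y s; rewrite -(can2_eq sigmaK sigmaK) expr1 mulN1r.
  by rewrite [RHS]eq_sym subr_eq [s + x]addrC.
rewrite /twisted_paley_sum_adj (adj_eq (phi := sigma) (b := false)).
  exact: (ram_gen hq false sigmaD sigmaK sigmaQ).
move=> x y s; rewrite -(can2_eq sigmaK sigmaK) expr0 mul1r.
by rewrite [- x + s]addrC eq_sym subr_eq.
Qed.
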